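(* Let $G$ be a $2$-connected bipartite graph of order $n\ge 9$. Then ${\rm cc}(G)\ge 8$. Moreover, ${\rm cc}(G)=8$ if and only if $G\in\mathscr{F}_n$.
   Context: All graphs are finite and simple. A cummerbund of a graph is a longest cycle; ${\rm cc}(G)$ is the number of vertices of $G$ lying in at least one cummerbund. The family $\mathscr{F}_n=\{G_{1,n},\dots,G_{7,n}\}$ is defined as follows: start with an $8$-cycle $v_1v_2\cdots v_8v_1$, add a chord set $E_i$, and add $n-8$ new pairwise nonadjacent vertices each adjacent exactly to $v_1$ and $v_5$. The chord sets are: $E_1=\emptyset$; $E_2=\{v_1v_4\}$; $E_3=\{v_1v_4,v_1v_6\}$; $E_4=\{v_1v_4,v_2v_5\}$; $E_5=\{v_1v_4,v_5v_8\}$; $E_6=\{v_1v_4,v_1v_6,v_2v_5\}$; $E_7=\{v_1v_4,v_1v_6,v_2v_5,v_5v_8\}$. (Equivalently, $G_{i,9}$ is the order-$9$ graph with one added vertex $v$ adjacent to $v_1,v_5$, and $G_{i,n}$ is obtained from it by duplicating $v$ $n-9$ times, where duplicating $v$ means adding a new vertex with neighborhood $N(v)$.) *)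

(* Defs.v *)
(* Graphs: symmetric irreflexive relation e on a finType T. *)
From mathcomp Require Import all_boot.
From mathcomp Require Import boolp.
Set Implicit Arguments. Unset Strict Implicit. Unset Printing Implicit Defensive.

Section Graphs.
Variables (T : finType) (e : rel T).

Definition is_cycle (c : seq T) : Prop :=
  [/\ 3 <= size c, uniq c & cycle e c].

Definition cummerbund (c : seq T) : Prop :=
  is_cycle c /\ forall d, is_cycle d -> size d <= size c.

Definition cc : nat :=
  #|[set x : T | `[< exists c, cummerbund c /\ x \in c >]]|.

(* Connectivity of G - z (for z = None: of G itself). *)
Definition connected_minus (z : option T) : Prop :=
  forall x y, Some x != z -> Some y != z ->
    connect [rel u v | [&& Some u != z, Some v != z & e u v]] x y.

Definition two_connected : Prop :=
  2 < #|T| /\ forall z : option T, connected_minus z.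

Definition bipartite : Prop :=
  exists f : T -> bool, forall x y, e x y -> f x != f y.

End Graphs.

(* The family F_n.  Vertices of G_{i,n} are 'I_n; vertex k < 8 stands for
   v_{k+1}, vertices k >= 8 are the n-8 added vertices adjacent to v1, v5. *)
Definition chords (i : nat) : seq (nat * nat) :=
  match i with
  | 0 => [::]
  | 1 => [:: (0, 3)]
  | 2 => [:: (0, 3); (0, 5)]
  | 3 => [:: (0, 3); (1, 4)]
  | 4 => [:: (0, 3); (4, 7)]
  | 5 => [:: (0, 3); (0, 5); (1, 4)]
  | _ => [:: (0, 3); (0, 5); (1, 4); (4, 7)]
  end.

Definition fam_base (i a b : nat) : bool :=
  [|| [&& a < 8, b < 8 & b == (a + 1) %% 8],
      (a, b) \in chords i
    | (8 <= a) && ((b == 0) || (b == 4))].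

(* G_{i+1,n} for i : 'I_7 *)
Definition famG (n : nat) (i : 'I_7) : rel 'I_n :=
  fun x y => fam_base i x y || fam_base i y x.

Definition isomorphic (T U : finType) (e : rel T) (f : rel U) : Prop :=
  exists g : T -> U, bijective g /\ forall x y, e x y = f (g x) (g y).
Arguments famG n i : clear implicits.

(* Main.v *)
Require Import Defs.
From mathcomp Require Import all_boot.
From mathcomp Require Import boolp.
From mathcomp Require Import zify.
Set Implicit Arguments. Unset Strict Implicit. Unset Printing Implicit Defensive.

Section Gen.
Variables (T : finType) (e : rel T).
Hypotheses (e_sym : symmetric e) (e_irr : irreflexive e).

Definition er (z : option T) : rel T :=
  [rel u v | [&& Some u != z, Some v != z & e u v]].

Definition fan (A : pred T) (a : T) (r : seq T) (b : T) : Prop :=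
  A a /\ A b /\ a != b /\ uniq r /\ all (fun v => ~~ A v) r /\ path e a (rcons r b).

Lemma er_sub z : subrel (er z) e.
Proof. by move=> u v /and3P[]. Qed.

Lemma er_avoid z x p : path (er z) x p -> all (fun v => Some v != z) p.
Proof.
elim: p x => //= y p IH x /andP[/and3P[_ H _] /IH ->]; by rewrite H.
Qed.

Lemma path_rev_sym a r b : path e a (rcons r b) -> path e b (rcons (rev r) a).
Proof.
move=> H; have := rev_path e a (rcons r b).
rewrite last_rcons belast_rcons rev_cons => ->.
by rewrite (@eq_path _ _ e) // => u v; rewrite e_sym.
Qed.

Lemma fan_rev A a r b : fan A a r b -> fan A b (rev r) a.
Proof.
case=> Aa [Ab [ab [ur [ar pr]]]]; do !split => //.
- by rewrite eq_sym.
- by rewrite rev_uniq.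
- by rewrite all_rev.
- exact: path_rev_sym.
Qed.

Lemma first_hit (e' : rel T) (A : pred T) x p :
  path e' x p -> ~~ A x -> A (last x p) ->
  exists p1 b, [/\ A b, all (fun v => ~~ A v) p1, path e' x (rcons p1 b)
                  & subseq (rcons p1 b) p].
Proof.
elim: p x => [|y p IH] x /=; first by move=> _ /negPf ->.
move=> /andP[exy py] nAx Al.
case Ay: (A y).
  exists [::], y; split => //=; first by rewrite exy.
  by rewrite eqxx sub0seq.
have [p1 [b [Ab ap1 pp1 sp1]]] := IH y py (negbT Ay) Al.
exists (y :: p1), b; split => //=; first by rewrite Ay.
- by rewrite exy.
- by rewrite eqxx.
Qed.

Hypothesis two_conn : two_connected e.

Lemma get_path z x y : Some x != z -> Some y != z ->
  exists p, [/\ path (er z) x p, uniq (x :: p) & last x p = y].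
Proof.
move=> hx hy; have := (two_conn.2 z x y hx hy).
case/connectP => p pp ->.
have pp' : path (er z) x p by [].
case: (shortenP pp') => p' pp'' up' _.
by exists p'.
Qed.

Lemma pcCA (s1 s2 s3 : seq T) : perm_eq (s1 ++ s2 ++ s3) (s2 ++ s1 ++ s3).
Proof. exact: (introT permPl (perm_catCA _ _ _)). Qed.

Lemma uniq_perm3 (s1 s2 s3 : seq T) :
  uniq (s1 ++ s3) -> uniq s2 -> (forall v, v \in s2 -> v \notin s1 ++ s3) ->
  uniq (s1 ++ s2 ++ s3).
Proof.
move=> u13 u2 d; rewrite (perm_uniq (pcCA s1 s2 s3)) cat_uniq u13 u2 andbT /=.
by apply/hasPn => v; apply: contraL => /d.
Qed.

Lemma ext_core A a r1 y r2 b x p1 z :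
  fan A a (r1 ++ y :: r2) b -> x \notin (r1 ++ y :: r2) -> ~~ A x -> e x y ->
  path e x (rcons p1 z) -> uniq (x :: rcons p1 z) ->
  all (fun v => ~~ A v) p1 -> all (fun v => v \notin r1 ++ y :: r2) p1 ->
  (A z && (z != a)) || (z \in r2) ->
  exists a' r' b', fan A a' r' b' /\ x \in r'.
Proof.
case=> Aa [Ab [ab [ur [ar pr]]]] xr nAx exy pp up ap1A ap1r hz.
have pr' := pr; rewrite rcons_cat cat_path /= in pr'.
case/and3P: pr' => pr1 ely pr2.
have ur2 := ur; rewrite cat_uniq /= in ur2.
case/and3P: ur2 => ur1 _ /andP[yr2 ur2'].
case/orP: hz => [/andP[Az za] | zr2].
- exists a, (r1 ++ y :: x :: p1), z; split; last by rewrite mem_cat !inE eqxx /= !orbT.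
  do !split => //.
  + by rewrite eq_sym.
  + move: up; rewrite /= rcons_uniq => /and3P[xp zp up1].
    have -> : r1 ++ y :: x :: p1 = rcons r1 y ++ (x :: p1) ++ [::] by rewrite cats0 cat_rcons.
    apply: uniq_perm3; rewrite ?cats0.
    * by rewrite rcons_uniq ur1 andbT; move: ur; rewrite cat_uniq /= => /and3P[_ /norP[]].
    * rewrite /= up1 andbT.
      by move: xp; rewrite mem_rcons inE negb_or => /andP[].
    * have sub1 : {subset rcons r1 y <= r1 ++ y :: r2}.
        by move=> v; rewrite mem_rcons mem_cat !inE; case/orP=> ->; rewrite ?orbT.
      move=> v; rewrite inE => /orP[/eqP->|vp]; apply/negP => /sub1 H.
        exact: (negP xr H).
      exact: (negP (allP ap1r v vp) H).
  + rewrite all_cat /= nAx ap1A !andbT.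
    by move: ar; rewrite all_cat /= => /and3P[-> -> _].
  + rewrite rcons_cat cat_path pr1 /= ely /= e_sym exy /=.
    exact: pp.
- case/splitPr: zr2 pr2 ur ar xr ap1r ab Ab yr2 ur2' => s1 s2 pr2 ur ar xr ap1r ab Ab yr2 ur2'.
  exists a, (r1 ++ y :: x :: p1 ++ z :: s2), b; split; last by rewrite mem_cat !inE eqxx /= !orbT.
  do !split => //.
  + move: up; rewrite /= rcons_uniq => /and3P[xp zp up1].
    have -> : r1 ++ y :: x :: p1 ++ z :: s2 = (rcons r1 y) ++ (x :: p1) ++ (z :: s2)
      by rewrite cat_rcons.
    apply: uniq_perm3.
    * apply: (subseq_uniq _ ur).
      have -> : r1 ++ y :: s1 ++ z :: s2 = rcons r1 y ++ (s1 ++ z :: s2) by rewrite cat_rcons.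
      rewrite subseq_cat2l.
      exact: suffix_subseq.
    * rewrite /= up1 andbT.
      by move: xp; rewrite mem_rcons inE negb_or => /andP[].
    * have sub2 : {subset rcons r1 y ++ z :: s2 <= r1 ++ y :: s1 ++ z :: s2}.
        move=> v; rewrite !(mem_cat, mem_rcons, inE).
        by case/orP=> [/orP[->|->]|/orP[->|->]]; rewrite ?orbT.
      move=> v; rewrite inE => /orP[/eqP->|vp]; apply/negP => /sub2 H.
        exact: (negP xr H).
      exact: (negP (allP ap1r v vp) H).
    rewrite !all_cat /= !all_cat /= nAx ap1A /=.
    by move: ar; rewrite !all_cat /= !all_cat /= => /and4P[-> -> _ /andP[-> ->]].
  + rewrite rcons_cat cat_path pr1 /= ely /= e_sym exy /=.
    rewrite rcons_cat -cat_rcons cat_path pp /=.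
    rewrite last_rcons.
    by move: pr2; rewrite rcons_cat cat_path /= => /andP[_ /andP[_ ->]].
Qed.


Lemma some_neq (x y : T) : x != y -> Some x != Some y.
Proof. by apply: contra => /eqP [->]. Qed.

Lemma ext A a r b y x : fan A a r b -> y \in r -> e x y -> ~~ A x ->
  exists a' r' b', fan A a' r' b' /\ x \in r'.
Proof.
move=> F yr exy nAx.
case: (boolP (x \in r)) => xr; first by exists a, r, b.
have [Aa [Ab [ab [ur [ar pr]]]]] := F.
have nAy : ~~ A y := allP ar y yr.
have xy : x != y by apply: contraTneq exy => ->; rewrite e_irr.
have ay : a != y by apply: contraNneq nAy => <-.
have [q [pq uq lq]] := get_path (some_neq xy) (some_neq ay).
pose S := fun v => A v || (v \in r).
have nSx : ~~ S x by rewrite /S negb_or nAx xr.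
have SL : S (last x q) by rewrite lq /S Aa.
have [p1 [z [Sz ap1 pp1 sp1]]] := first_hit pq nSx SL.
have pp : path e x (rcons p1 z) := sub_path (@er_sub _) pp1.
have up : uniq (x :: rcons p1 z).
  by apply: (subseq_uniq _ uq); rewrite /= eqxx.
have yz : y \notin rcons p1 z.
  apply/negP => /(mem_subseq sp1) yq.
  by have := allP (er_avoid pq) y yq; rewrite eqxx.
have ap1A : all (fun v => ~~ A v) p1.
  by apply/allP => v vp; have := allP ap1 v vp; rewrite /S negb_or => /andP[].
have ap1r : all (fun v => v \notin r) p1.
  by apply/allP => v vp; have := allP ap1 v vp; rewrite /S negb_or => /andP[].
have [r1 [r2 er]] : exists r1 r2, r = r1 ++ y :: r2.
  by case/splitPr: yr => r1 r2; exists r1, r2.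
subst r.
have hrev : rev (r1 ++ y :: r2) = rev r2 ++ y :: rev r1.
  by rewrite rev_cat rev_cons cat_rcons.
have F' := fan_rev F; rewrite hrev in F'.
have xr' : x \notin rev r2 ++ y :: rev r1 by rewrite -hrev mem_rev.
have ap1r' : all (fun v => v \notin rev r2 ++ y :: rev r1) p1.
  by apply/allP => v vp; rewrite -hrev mem_rev; exact: (allP ap1r v vp).
case/orP: Sz => [Az | zr].
  case: (eqVneq z a) => [za | za].
    apply: (ext_core F' xr' nAx exy pp up ap1A ap1r').
    by rewrite Az za ab.
  apply: (ext_core F xr nAx exy pp up ap1A ap1r).
  by rewrite Az za.
move: zr; rewrite mem_cat inE => /orP[zr1 | /orP[/eqP zy | zr2]].
- apply: (ext_core F' xr' nAx exy pp up ap1A ap1r').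
  by rewrite mem_rev zr1 orbT.
- by move: yz; rewrite -zy mem_rcons inE eqxx.
- apply: (ext_core F xr nAx exy pp up ap1A ap1r).
  by rewrite zr2 orbT.
Qed.

Lemma fan_exists (A : pred T) a0 b0 : A a0 -> A b0 -> a0 != b0 ->
  forall x, ~~ A x -> exists a r b, fan A a r b /\ x \in r.
Proof.
move=> Aa0 Ab0 ab0.
suff H : forall n x p, size p <= n -> path e x p -> ~~ A x -> A (last x p) ->
    exists a r b, fan A a r b /\ x \in r.
  move=> x nAx.
  have [p [pp _ lp]] := get_path (z := None) (x := x) (y := a0) isT isT.
  apply: (H (size p) x p (leqnn _) (sub_path (@er_sub _) pp) nAx).
  by rewrite lp.
elim=> [|n IH] x [|y p] //=; try by move=> _ _ /negPf ->.
move=> sz /andP[exy pp] nAx lA.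
case Ay: (A y); last first.
  have [a [r [b [F yr]]]] := IH y p sz pp (negbT Ay) lA.
  exact: ext F yr exy nAx.
have [b1 [Ab1 b1y]] : exists b1, A b1 /\ b1 != y.
  case: (eqVneq a0 y) => [a0y | h]; last by exists a0.
  by exists b0; split => //; rewrite -a0y eq_sym.
have xy : x != y by apply: contraNneq nAx => ->; rewrite Ay.
have [q [pq uq lq]] := get_path (some_neq xy) (some_neq b1y).
have LA : A (last x q) by rewrite lq.
have [p1 [z [Az ap1 pp1 sp1]]] := first_hit pq nAx LA.
have pp' : path e x (rcons p1 z) := sub_path (@er_sub _) pp1.
have up : uniq (x :: rcons p1 z).
  by apply: (subseq_uniq _ uq); rewrite /= eqxx.
have yz : y \notin rcons p1 z.
  apply/negP => /(mem_subseq sp1) yq.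
  by have := allP (er_avoid pq) y yq; rewrite eqxx.
exists y, (x :: p1), z; split; last by rewrite inE eqxx.
do !split => //.
- by apply: contraNneq yz => <-; rewrite mem_rcons inE eqxx.
- by move: up; rewrite -rcons_cons rcons_uniq => /andP[].
- by rewrite /= nAx.
- by rewrite /= e_sym exy.
Qed.

End Gen.


Section Cyc.
Variables (T : finType) (e : rel T).
Hypotheses (e_sym : symmetric e) (e_irr : irreflexive e).

Lemma uniq_join (r s : seq T) : uniq r -> uniq s -> (forall v, v \in s -> v \notin r) ->
  uniq (r ++ s).
Proof.
move=> ur us d; rewrite cat_uniq ur us andbT.
by apply/hasPn => v /d.
Qed.

Lemma cummerbund_cycle c : cummerbund e c -> is_cycle e c.
Proof. by case. Qed.

Lemma exists_cummerbund : (exists c, is_cycle e c) -> exists c, cummerbund e c.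
Proof.
move=> [c0 Hc0].
pose P := fun k => `[< exists c, is_cycle e c /\ size c = k >].
have hex : exists k, P k by exists (size c0); apply/asboolP; exists c0.
have hb : forall k, P k -> k <= #|T|.
  move=> k /asboolP [c [[_ uc _] <-]].
  by rewrite -(card_uniqP uc); apply: max_card.
case: (ex_maxnP hex hb) => k /asboolP [c [Hc sc]] hmax.
exists c; split => // d Hd; rewrite sc; apply: hmax.
by apply/asboolP; exists d.
Qed.

Definition ccset := [set x : T | `[< exists c, cummerbund e c /\ x \in c >]].

Lemma ccE : cc e = #|ccset|. Proof. by []. Qed.

Lemma cc_ge c : cummerbund e c -> size c <= cc e.
Proof.
move=> Hc; have [[_ uc _] _] := Hc.
rewrite ccE -(card_uniqP uc); apply: subset_leq_card.
by apply/subsetP => x xc; rewrite inE; apply/asboolP; exists c.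
Qed.

Lemma cc_gt c y : cummerbund e c -> y \notin c -> (exists d, cummerbund e d /\ y \in d) ->
  size c < cc e.
Proof.
move=> Hc yc Hy; have [[_ uc _] _] := Hc.
have u : uniq (y :: c) by rewrite /= yc uc.
rewrite ccE -[(size c).+1]/(size (y :: c)) -(card_uniqP u); apply: subset_leq_card.
apply/subsetP => x; rewrite inE => /orP[/eqP -> | xc]; rewrite inE; apply/asboolP => //.
by exists c.
Qed.

Lemma cc_all : (forall x, exists d, cummerbund e d /\ x \in d) -> cc e = #|T|.
Proof.
move=> H; rewrite ccE.
have -> : ccset = [set: T] by apply/setP => x; rewrite !inE; apply/asboolP.
by rewrite cardsT.
Qed.

Lemma exists_cycle : 3 <= #|T| -> two_connected e -> exists c, is_cycle e c.
Proof.
move=> c3 tc.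
have: 3 <= size (enum T) by rewrite -cardT.
move: (enum_uniq T); case: (enum T) => [|u [|v [|w s]]] //=.
rewrite !inE !negb_or => /andP[/and3P[uv uw _] /andP[/andP[vw _] _]] _.
have [p [pp _ lp]] := get_path tc (z := None) (x := u) (y := v) isT isT.
case: p pp lp => [|y p] /=; first by move=> _ uv'; rewrite uv' eqxx in uv.
move=> /andP[/and3P[_ _ euy] _] _.
have uy : u != y by apply: contraTneq euy => ->; rewrite e_irr.
have [w' [w'u w'y]] : exists w', w' != u /\ w' != y.
  case: (eqVneq v y) => [vy|vy]; last by exists v; rewrite eq_sym.
  by exists w; split; rewrite eq_sym // -vy.
have nA : ~~ (pred2 u y) w' by rewrite /= negb_or w'u w'y.
have A0 : pred2 u y u by rewrite /= eqxx.
have B0 : pred2 u y y by rewrite /= eqxx orbT.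
have [a [r [b [[Aa [Ab [ab [ur [ar pr]]]]] w'r]]]] :=
  fan_exists e_sym e_irr tc A0 B0 uy nA.
have eab : e b a.
  move: Aa Ab ab; rewrite /= => /orP[]/eqP-> /orP[]/eqP->; rewrite ?eqxx //.
  by rewrite e_sym.
have anr : a \notin r by apply/negP => /(allP ar); rewrite Aa.
have bnr : b \notin r by apply/negP => /(allP ar); rewrite Ab.
exists (a :: rcons r b); split.
- by rewrite /= size_rcons; case: r w'r {ur ar pr anr bnr}.
- by rewrite /= rcons_uniq mem_rcons inE negb_or ab anr bnr ur.
- by rewrite /= rcons_path pr last_rcons eab.
Qed.

Variable f : T -> bool.
Hypothesis fH : forall x y, e x y -> f x != f y.

Lemma parity x p : path e x p -> f (last x p) = f x (+) odd (size p).
Proof.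
elim: p x => [|y p IH] x /=; first by rewrite addbF.
move=> /andP[exy /IH ->]; move: (fH exy).
by case: (f x); case: (f y); case: (odd (size p)).
Qed.

Lemma splice c a r b : cummerbund e c -> fan e (fun v => v \in c) a r b -> r != [::] ->
  exists q1 q2, rot (index a c) c = a :: q1 ++ b :: q2 /\ [/\
     size r <= size q1, size r <= size q2,
     odd (size r) = odd (size q1), odd (size r) = odd (size q2)
   & (size r = size q1 \/ size r = size q2) ->
       forall y, y \in r -> exists d, cummerbund e d /\ y \in d].
Proof.
move=> Hc F rn.
have [[c3 uc ccy] cmax] := Hc.
have [Aa [Ab [ab [ur [ar pr]]]]] := F.
have [q hq] : exists q, rot (index a c) c = a :: q by eexists; exact: rot_index Aa.
have bq : b \in q.
  by move: Ab; rewrite -(mem_rot (index a c)) hq inE eq_sym (negbTE ab).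
case/splitPr: bq hq => q1 q2 hq.
exists q1, q2.
have uC : uniq (a :: q1 ++ b :: q2) by rewrite -hq rot_uniq.
have cC : cycle e (a :: q1 ++ b :: q2) by rewrite -hq rot_cycle.
have sC : size c = (size q1 + size q2).+2.
  by rewrite -(size_rot (index a c)) hq /= size_cat /= addnS.
have mC : forall v, v \in a :: q1 ++ b :: q2 -> v \in c by move=> v; rewrite -hq mem_rot.
have rC : forall v, v \in r -> v \notin c by move=> v /(allP ar).
move: (cC); rewrite /= rcons_cat cat_path /= => /and3P[pq1 eq1 pq2].
have pr' := pr; rewrite rcons_path in pr'; case/andP: pr' => pr1 er1.
have cyc1 : is_cycle e (a :: r ++ b :: q2).
  split.
  - by case: r rn {F ur ar pr rC pr1 er1} => //= *; rewrite size_cat /= !addnS.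
  - rewrite -cat1s (perm_uniq (pcCA _ _ _)); apply: uniq_join => //.
      apply: (subseq_uniq _ uC); rewrite /= eqxx; exact: suffix_subseq.
    move=> v vin; have vc : v \in c.
      by apply: mC; move: vin; rewrite !(mem_cat, inE); case/orP=> [->|/orP[->|->]]; rewrite ?orbT.
    by apply/negP => /rC; rewrite vc.
  - by rewrite /= rcons_cat cat_path pr1 /= er1.
have cyc2 : is_cycle e (a :: q1 ++ b :: rev r).
  split.
  - by case: r rn {F ur ar pr rC pr1 er1 cyc1} => //= *; rewrite size_cat /= rev_cons size_rcons !addnS.
  - have -> : a :: q1 ++ b :: rev r = rcons (a :: q1) b ++ rev r by rewrite rcons_cons /= cat_rcons.
    apply: uniq_join.
    + apply: (subseq_uniq _ uC); rewrite rcons_cons /= eqxx.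
      by rewrite -cats1 subseq_cat2l /= eqxx sub0seq.
    + by rewrite rev_uniq.
    + move=> v; rewrite mem_rev => /rC; apply: contra => vin; apply: mC.
      by move: vin; rewrite !(mem_rcons, mem_cat, inE); case/orP=> [->|/orP[->|->]]; rewrite ?orbT.
  - rewrite /= rcons_cat cat_path pq1 /= eq1 /=.
    exact: path_rev_sym.
have s1 := cmax _ cyc1; have s2 := cmax _ cyc2.
rewrite sC /= size_cat /= in s1; rewrite sC /= size_cat /= size_rev in s2.
have h1 := parity pr; have h2 := parity pq2.
have pq1' : path e a (rcons q1 b) by rewrite rcons_path pq1 eq1.
have h3 := parity pq1'.
rewrite !last_rcons !size_rcons /= in h1 h2 h3.
split => //; split.
- by clear -s1; lia.
- by clear -s2; lia.
- by move: h1 h3; case: (f a); case: (f b); case: (odd (size r)); case: (odd (size q1)).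
- by move: h1 h2; case: (f a); case: (f b); case: (odd (size r)); case: (odd (size q2)).
move=> [hr | hr] y yr.
- exists (a :: r ++ b :: q2); split; last by rewrite inE mem_cat yr orbT.
  split => // d Hd; have := cmax d Hd; rewrite sC /= size_cat /= hr.
  by clear; lia.
- exists (a :: q1 ++ b :: rev r); split; last by rewrite inE mem_cat inE mem_rev yr !orbT.
  split => // d Hd; have := cmax d Hd; rewrite sC /= size_cat /= size_rev hr.
  by clear; lia.
Qed.

End Cyc.


Section Main1.
Variables (T : finType) (e : rel T).
Hypotheses (e_sym : symmetric e) (e_irr : irreflexive e) (tc : two_connected e).
Variable f : T -> bool.
Hypothesis fH : forall x y, e x y -> f x != f y.

Lemma two_in c : cummerbund e c -> exists a0 b0, [/\ a0 \in c, b0 \in c & a0 != b0].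
Proof.
move=> Hc; have [[c3 uc _] _] := Hc; case: c c3 uc {Hc} => [|a [|b s]] //= _.
rewrite inE negb_or => /andP[/andP[ab _] _].
by exists a, b; split; rewrite ?inE ?eqxx ?orbT.
Qed.

Lemma small_all c0 : cummerbund e c0 -> size c0 <= 7 ->
  forall x, exists d, cummerbund e d /\ x \in d.
Proof.
move=> Hc s7 x.
case: (boolP (x \in c0)) => xc; first by exists c0.
have [a0 [b0 [a0c b0c ab0]]] := two_in Hc.
have [a [r [b [F xr]]]] := fan_exists e_sym e_irr tc (A := fun v => v \in c0) a0c b0c ab0 xc.
have rn : r != [::] by case: r xr {F}.
have [q1 [q2 [hq [h1 h2 h3 h4 h5]]]] := splice e_sym fH Hc F rn.
apply: h5 => //.
have sc : size c0 = (size q1 + size q2).+2.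
  by rewrite -(size_rot (index a c0)) hq /= size_cat /= addnS.
have o1 : size r %% 2 = size q1 %% 2 by rewrite !modn2 h3.
have o2 : size r %% 2 = size q2 %% 2 by rewrite !modn2 h4.
have r1 : 0 < size r by case: r rn {F xr h1 h2 h3 h4 o1 o2}.
by clear -s7 sc o1 o2 r1 h1 h2; lia.
Qed.

Hypothesis n9 : 9 <= #|T|.

Lemma some_cummerbund : exists c, cummerbund e c.
Proof.
apply: exists_cummerbund; apply: (exists_cycle e_sym e_irr) => //.
by apply: leq_trans n9.
Qed.

Lemma part1 : 8 <= cc e.
Proof.
have [c0 Hc] := some_cummerbund.
case: (leqP 8 (size c0)) => h; first by apply: leq_trans h (cc_ge Hc).
by rewrite (cc_all (small_all Hc h)); apply: leq_trans n9.
Qed.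

Lemma eight_facts c0 : cc e = 8 -> cummerbund e c0 ->
  size c0 = 8 /\ forall x, x \notin c0 -> ~ (exists d, cummerbund e d /\ x \in d).
Proof.
move=> h8 Hc; split.
  case: (leqP (size c0) 7) => h.
    by move: n9; rewrite -(cc_all (small_all Hc h)) h8.
  have := cc_ge Hc; rewrite h8; clear -h; lia.
move=> x xc Hx; have := cc_gt Hc xc Hx; rewrite h8 => h.
case: (leqP (size c0) 7) => h'.
  by move: n9; rewrite -(cc_all (small_all Hc h')) h8.
by clear -h h'; lia.
Qed.

Lemma CP c a r b : cummerbund e c -> size c = 8 ->
  (forall x, x \notin c -> ~ (exists d, cummerbund e d /\ x \in d)) ->
  fan e (fun v => v \in c) a r b -> r != [::] ->
  size r = 1 /\ exists q1 q2, [/\ rot (index a c) c = a :: q1 ++ b :: q2, size q1 = 3 & size q2 = 3].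
Proof.
move=> Hc s8 NoOut F rn.
have [q1 [q2 [hq [h1 h2 h3 h4 h5]]]] := splice e_sym fH Hc F rn.
have sc : size c = (size q1 + size q2).+2.
  by rewrite -(size_rot (index a c)) hq /= size_cat /= addnS.
have [Aa [Ab [ab [ur [ar pr]]]]] := F.
have neq : ~ (size r = size q1 \/ size r = size q2).
  move=> H; case: r rn h5 ar H {F ur pr h1 h2 h3 h4} => // y r _ h5 ar H.
  have := h5 H y (mem_head _ _); apply: NoOut.
  by move: ar => /= /andP[].
have o1 : size r %% 2 = size q1 %% 2 by rewrite !modn2 h3.
have o2 : size r %% 2 = size q2 %% 2 by rewrite !modn2 h4.
have r1 : 0 < size r by case: r rn {F h1 h2 h3 h4 h5 o1 o2 neq ur ar pr}.
have [H1 [H2 H3]] : size r = 1 /\ size q1 = 3 /\ size q2 = 3.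
  by clear -s8 sc o1 o2 r1 h1 h2 neq; lia.
split => //; by exists q1, q2.
Qed.

End Main1.


Section Final.
Variables (T : finType) (e : rel T).
Hypotheses (e_sym : symmetric e) (e_irr : irreflexive e) (tc : two_connected e).
Variable f : T -> bool.
Hypothesis fH : forall x y, e x y -> f x != f y.
Variables v0 v1 v2 v3 v4 v5 v6 v7 w : T.
Local Notation c := [:: v0; v1; v2; v3; v4; v5; v6; v7].
Hypothesis Hc : cummerbund e c.
Hypothesis NoOut : forall x, x \notin c -> ~ (exists d, cummerbund e d /\ x \in d).
Hypotheses (wc : w \notin c) (ew0 : e w v0) (ew4 : e w v4).

Lemma uc : uniq c. Proof. by case: Hc => [[]]. Qed.
Lemma cmax d : is_cycle e d -> size d <= 8. Proof. by case: Hc => _ /(_ d). Qed.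
Lemma cyc_edges : [/\ e v0 v1, e v1 v2, e v2 v3, e v3 v4 &
                   [/\ e v4 v5, e v5 v6, e v6 v7 & e v7 v0]].
Proof.
case: Hc => [[_ _ cy] _]; move: cy => /=.
move=> /andP[h1 /andP[h2 /andP[h3 /andP[h4 /andP[h5 /andP[h6 /andP[h7 /andP[h8 _]]]]]]]].
by split => //; split.
Qed.

Lemma mkc (s : seq T) (l : seq nat) : uniq s -> all (fun i => i < size s) l -> uniq l ->
  3 <= size l -> cycle (fun i j => e (nth w s i) (nth w s j)) l ->
  is_cycle e (map (nth w s) l).
Proof.
move=> us al ul l3 cl; split; first by rewrite size_map.
- rewrite map_inj_in_uniq // => i j il jl /eqP.
  by rewrite nth_uniq ?(allP al _ il) ?(allP al _ jl) // => /eqP.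
- by rewrite cycle_map.
Qed.

Lemma long_false (s : seq T) (l : seq nat) : uniq s -> all (fun i => i < size s) l -> uniq l ->
  9 <= size l -> cycle (fun i j => e (nth w s i) (nth w s j)) l -> False.
Proof.
move=> us al ul l9 cl; have := cmax (mkc us al ul (leq_trans _ l9) cl).
by rewrite size_map; clear -l9; lia.
Qed.

Lemma w8_false (s : seq T) (l : seq nat) x : uniq s -> all (fun i => i < size s) l -> uniq l ->
  size l = 8 -> cycle (fun i j => e (nth w s i) (nth w s j)) l ->
  x \in map (nth w s) l -> x \notin c -> False.
Proof.
move=> us al ul l8 cl xin xc; apply: (NoOut xc); exists (map (nth w s) l); split => //.
split; first by apply: mkc => //; rewrite l8.
by move=> d Hd; rewrite size_map l8; apply: cmax.
Qed.

Definition ant a := nth w (rot (index a c) c) 4.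

Lemma CPc a r b : fan e (fun v => v \in c) a r b -> r != [::] -> size r = 1 /\ b = ant a.
Proof.
move=> F rn; have [r1 [q1 [q2 [hq sq1 sq2]]]] := CP e_sym fH Hc (erefl _) NoOut F rn.
split => //; rewrite /ant hq /= nth_cat sq1 ltnn subnn //.
Qed.

Lemma ant_i i : i < 8 -> ant (nth w c i) = nth w c ((i + 4) %% 8).
Proof.
move=> hi; rewrite /ant index_uniq ?uc //.
by case: i hi => [|[|[|[|[|[|[|[|i]]]]]]]].
Qed.

Lemma fe x y : e x y -> f y = ~~ f x.
Proof. by move/fH; case: (f x); case: (f y). Qed.

Lemma nf x y : f x = f y -> e x y = false.
Proof. by move=> h; apply/negP => /fH; rewrite h eqxx. Qed.

Lemma v0c : v0 \in c. Proof. exact: mem_head. Qed.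
Lemma v1c : v1 \in c. Proof. by rewrite !inE eqxx orbT. Qed.
Lemma v01 : v0 != v1.
Proof. by apply/negP => /eqP h; move: uc; rewrite h /= inE eqxx. Qed.

Lemma nbr x : x \notin c -> exists a, a \in c /\ forall t, e x t = (t == a) || (t == ant a).
Proof.
move=> xc.
have [a [r [b [F xr]]]] := fan_exists e_sym e_irr tc (A := fun v => v \in c)
   v0c v1c v01 xc.
have rn : r != [::] by case: r xr {F}.
have [sr ab] := CPc F rn.
have [Aa [Ab [aneb [ur [ar pr]]]]] := F.
case: r sr xr {F rn ur ar} pr => [|y [|z r]] //= _; rewrite inE => /eqP <-.
move=> /andP[eax /andP[exb _]].
exists a; split => // t; rewrite -ab.
apply/idP/idP; last first.
  by case/orP => /eqP ->; rewrite ?exb // e_sym.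
move=> ext.
have tc' : t \in c.
  apply/negPn/negP => tnc.
  have [a' [r' [b' [F' tr']]]] := fan_exists e_sym e_irr tc (A := fun v => v \in c)
     v0c v1c v01 tnc.
  have rn' : r' != [::] by case: r' tr' {F'}.
  have [sr' _] := CPc F' rn'.
  have [Aa' [Ab' [ab' [ur' [ar' pr']]]]] := F'.
  case: r' sr' tr' {F' rn' ur' ar'} pr' => [|y' [|z' r']] //= _; rewrite inE => /eqP <-.
  move=> /andP[ea't /andP[etb' _]].
  have [a2 [A2 a2a eta2]] : exists a2, [/\ a2 \in c, a2 != a & e t a2].
    case: (eqVneq a' a) => [a'a|a'a]; last by exists a'; rewrite e_sym.
    by exists b'; rewrite -a'a eq_sym.
  have F2 : fan e (fun v => v \in c) a [:: x; t] a2.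
    do !split => //.
    - by rewrite eq_sym.
    - by rewrite /= inE andbT; apply: contraTneq ext => ->; rewrite e_irr.
    - by rewrite /= xc tnc.
    - by rewrite /= eax ext eta2.
  by have [] := CPc F2 isT.
case: (eqVneq t a) => [_|ta] //.
have F3 : fan e (fun v => v \in c) a [:: x] t.
  do !split => //.
  - by rewrite eq_sym.
  - by rewrite /= xc.
  - by rewrite /= eax ext.
have [_ tb] := CPc F3 isT.
by rewrite tb -ab eqxx orbT.
Qed.


Lemma nbr_i x : x \notin c -> exists i, i < 8 /\
  forall t, e x t = (t == nth w c i) || (t == nth w c ((i + 4) %% 8)).
Proof.
move=> xc; have [a [ac Ha]] := nbr xc.
exists (index a c); split; first by rewrite -[8]/(size c) index_mem.
by move=> t; rewrite -ant_i ?nth_index // -[8]/(size c) index_mem.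
Qed.

Lemma uniq_cwx x : x \notin c -> x != w -> uniq (c ++ [:: w; x]).
Proof.
move=> xc xw; rewrite cat_uniq uc /=.
by rewrite (negbTE wc) (negbTE xc) inE eq_sym xw.
Qed.

Lemma uniq_cw : uniq (rcons c w).
Proof. by rewrite rcons_uniq wc uc. Qed.

Lemma vneq i j : i < 8 -> j < 8 -> i != j -> (nth w c i == nth w c j) = false.
Proof. by move=> hi hj ij; rewrite nth_uniq ?uc // (negbTE ij). Qed.

Ltac ecl Hx := repeat (apply/andP; split); try done; try (by rewrite e_sym);
  try (by rewrite Hx eqxx ?orbT); try (by rewrite e_sym Hx eqxx ?orbT).

Lemma Nout x : x \notin c -> forall t, e x t = (t == v0) || (t == v4).
Proof.
move=> xc; have [i [hi Hx]] := nbr_i xc.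
have [e01 e12 e23 e34 [e45 e56 e67 e70]] := cyc_edges.
have xw : i != 0 -> i != 4 -> x != w.
  move=> i0 i4; apply/negP => /eqP xw; have := Hx v0; rewrite xw ew0.
  have -> : (v0 == nth w c i) = false by rewrite -[v0]/(nth w c 0) vneq // eq_sym.
  have -> : (v0 == nth w c ((i + 4) %% 8)) = false.
    rewrite -[v0]/(nth w c 0) vneq ?ltn_pmod // eq_sym.
    by move: i4 hi; clear; case: i => [|[|[|[|[|[|[|[|i]]]]]]]].
  by [].
move: Hx xw; case: i hi => [|[|[|[|[|[|[|[|i]]]]]]]] //= _ Hx xw.
- exfalso; have us := uniq_cwx xc (xw isT isT).
  by apply: (long_false (s := c ++ [:: w; x]) (l := [:: 0; 8; 4; 3; 2; 1; 9; 5; 6; 7]) us) => //=; ecl Hx.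
- exfalso; have us := uniq_cwx xc (xw isT isT).
  apply: (w8_false (s := c ++ [:: w; x]) (l := [:: 0; 8; 4; 5; 6; 9; 2; 1]) (x := w) us) => //=.
    by ecl Hx.
  by rewrite !inE eqxx !orbT.
- exfalso; have us := uniq_cwx xc (xw isT isT).
  by apply: (long_false (s := c ++ [:: w; x]) (l := [:: 0; 8; 4; 5; 6; 7; 9; 3; 2; 1]) us) => //=; ecl Hx.
- by move=> t; rewrite Hx /= orbC.
- exfalso; have us := uniq_cwx xc (xw isT isT).
  by apply: (long_false (s := c ++ [:: w; x]) (l := [:: 0; 8; 4; 3; 2; 1; 9; 5; 6; 7]) us) => //=; ecl Hx.
- exfalso; have us := uniq_cwx xc (xw isT isT).
  apply: (w8_false (s := c ++ [:: w; x]) (l := [:: 0; 8; 4; 5; 6; 9; 2; 1]) (x := w) us) => //=.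
    by ecl Hx.
  by rewrite !inE eqxx !orbT.
- exfalso; have us := uniq_cwx xc (xw isT isT).
  by apply: (long_false (s := c ++ [:: w; x]) (l := [:: 0; 8; 4; 5; 6; 7; 9; 3; 2; 1]) us) => //=; ecl Hx.
Qed.


Lemma chords_bad : [/\ e v2 v5 = false, e v3 v6 = false, e v6 v1 = false & e v7 v2 = false].
Proof.
have [e01 e12 e23 e34 [e45 e56 e67 e70]] := cyc_edges.
have us := uniq_cw.
have wm : forall l : seq nat, 8 \in l -> w \in map (nth w (rcons c w)) l.
  by move=> l l8; apply/mapP; exists 8.
split; apply: negbTE; apply/negP => h.
- apply: (w8_false (s := rcons c w) (l := [:: 0; 8; 4; 3; 2; 5; 6; 7]) (x := w) us _ _ _ _ (wm _ _) wc) => //=.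
  by repeat (apply/andP; split); try done; try (by rewrite e_sym).
- apply: (w8_false (s := rcons c w) (l := [:: 0; 8; 4; 5; 6; 3; 2; 1]) (x := w) us _ _ _ _ (wm _ _) wc) => //=.
  by repeat (apply/andP; split); try done; try (by rewrite e_sym).
- apply: (w8_false (s := rcons c w) (l := [:: 0; 8; 4; 3; 2; 1; 6; 7]) (x := w) us _ _ _ _ (wm _ _) wc) => //=.
  by repeat (apply/andP; split); try done; try (by rewrite e_sym).
- apply: (w8_false (s := rcons c w) (l := [:: 0; 8; 4; 5; 6; 7; 2; 1]) (x := w) us _ _ _ _ (wm _ _) wc) => //=.
  by repeat (apply/andP; split); try done; try (by rewrite e_sym).
Qed.

Definition cyc8 (p q : nat) := (q == p.+1) || ((p == 7) && (q == 0)).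
Definition isch (s0 s1 s4 s5 : bool) (p q : nat) :=
  [|| (p == 0) && (q == 3) && s0, (p == 1) && (q == 4) && s1,
      (p == 4) && (q == 7) && s4 | (p == 5) && (q == 0) && s5].
Definition Eb s0 s1 s4 s5 p q :=
  [|| cyc8 p q, cyc8 q p, isch s0 s1 s4 s5 p q | isch s0 s1 s4 s5 q p].

Lemma Ec p q : p < 8 -> q < 8 ->
  e (nth w c p) (nth w c q) = Eb (e v0 v3) (e v1 v4) (e v4 v7) (e v5 v0) p q.
Proof.
have [e01 e12 e23 e34 [e45 e56 e67 e70]] := cyc_edges.
have [b25 b36 b61 b72] := chords_bad.
have fe' : forall x y, e x y -> f y = ~~ f x.
  by move=> x y /fH; case: (f x); case: (f y).
have f1 := fe' _ _ e01; have f2 := fe' _ _ e12; have f3 := fe' _ _ e23.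
have f4 := fe' _ _ e34; have f5 := fe' _ _ e45; have f6 := fe' _ _ e56.
have f7 := fe' _ _ e67.
have nf' : forall x y, f x = f y -> e x y = false.
  by move=> x y h; apply/negP => /fH; rewrite h eqxx.
have n02 : e v0 v2 = false by apply: nf'; rewrite f2 f1 negbK.
have n04 : e v0 v4 = false by apply: nf'; rewrite f4 f3 f2 f1 !negbK.
have n06 : e v0 v6 = false by apply: nf'; rewrite f6 f5 f4 f3 f2 f1 !negbK.
have n13 : e v1 v3 = false by apply: nf'; rewrite f3 f2 negbK.
have n15 : e v1 v5 = false by apply: nf'; rewrite f5 f4 f3 f2 !negbK.
have n17 : e v1 v7 = false by apply: nf'; rewrite f7 f6 f5 f4 f3 f2 !negbK.
have n24 : e v2 v4 = false by apply: nf'; rewrite f4 f3 negbK.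
have n26 : e v2 v6 = false by apply: nf'; rewrite f6 f5 f4 f3 !negbK.
have n35 : e v3 v5 = false by apply: nf'; rewrite f5 f4 negbK.
have n37 : e v3 v7 = false by apply: nf'; rewrite f7 f6 f5 f4 !negbK.
have n46 : e v4 v6 = false by apply: nf'; rewrite f6 f5 negbK.
have n57 : e v5 v7 = false by apply: nf'; rewrite f7 f6 negbK.
have FS := (n02, n04, n06, n13, n15, n17, n24, n26, n35, n37, n46, n57, b25, b36, b61, b72).
case: p => [|[|[|[|[|[|[|[|p]]]]]]]] // _; case: q => [|[|[|[|[|[|[|[|q]]]]]]]] // _;
  rewrite /Eb /cyc8 /isch /= ?orbF;
  first [ by rewrite e_irr | done | by rewrite e_sym | by rewrite FS | by rewrite e_sym FS ].
Qed.

End Final.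


Definition famb (i a b : nat) := fam_base i a b || fam_base i b a.

Definition sg (k p : nat) : nat :=
  match k with 0 => p | 1 => (8 - p) %% 8 | 2 => (12 - p) %% 8 | _ => (p + 4) %% 8 end.

Definition pickfam (s0 s1 s4 s5 : bool) : nat * nat :=
  match s0, s5, s1, s4 with
  | false, false, false, false => (0, 0)
  | true, false, false, false => (1, 0)
  | false, true, false, false => (1, 1)
  | false, false, true, false => (1, 2)
  | false, false, false, true => (1, 3)
  | true, true, false, false => (2, 0)
  | false, false, true, true => (2, 2)
  | true, false, true, false => (3, 0)
  | false, true, false, true => (3, 1)
  | true, false, false, true => (4, 0)
  | false, true, true, false => (4, 1)
  | true, true, true, false => (5, 0)
  | true, true, false, true => (5, 1)
  | true, false, true, true => (5, 2)
  | false, true, true, true => (5, 3)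
  | true, true, true, true => (6, 0)
  end.

Definition checkb (s0 s1 s4 s5 : bool) : bool :=
  let i := (pickfam s0 s1 s4 s5).1 in let k := (pickfam s0 s1 s4 s5).2 in
  [&& i < 7,
      all (fun p => all (fun q => Eb s0 s1 s4 s5 p q == famb i (sg k p) (sg k q)) (iota 0 8)) (iota 0 8),
      all (fun p => sg k p < 8) (iota 0 8),
      all (fun p => all (fun q => (sg k p == sg k q) ==> (p == q)) (iota 0 8)) (iota 0 8) &
      all (fun p => ((sg k p == 0) || (sg k p == 4)) == ((p == 0) || (p == 4))) (iota 0 8)].

Lemma check s0 s1 s4 s5 : checkb s0 s1 s4 s5.
Proof. by case: s0; case: s1; case: s4; case: s5; vm_compute. Qed.

Lemma chords_lt (i a b : nat) : (a, b) \in chords i -> (a < 8) && (b < 8).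
Proof.
have : all (fun pr : nat * nat => (pr.1 < 8) && (pr.2 < 8)) (chords i).
  by case: i => [|[|[|[|[|[|i]]]]]].
by move/allP => H /H.
Qed.

Lemma fb_hi i a b : 8 <= a -> fam_base i a b = (b == 0) || (b == 4).
Proof.
move=> ha; rewrite /fam_base ltnNge ha /=.
case h: ((a, b) \in chords i); last by [].
by move: (chords_lt h); rewrite ltnNge ha.
Qed.

Lemma fb_lohi i a b : a < 8 -> 8 <= b -> fam_base i a b = false.
Proof.
move=> ha hb.
have hc : ((a, b) \in chords i) = false.
  by apply/negP => /chords_lt; rewrite [b < 8]ltnNge hb andbF.
have h1 : (b < 8) = false by rewrite ltnNge hb.
have h2 : (8 <= a) = false by rewrite leqNgt ha.
by rewrite /fam_base h1 h2 hc /= ?andbF.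
Qed.

Lemma iso_build (T : finType) (e : rel T) (c : seq T) (x0 : T) (i k : nat) :
  9 <= #|T| -> uniq c -> size c = 8 -> i < 7 ->
  (forall p, p < 8 -> sg k p < 8) ->
  (forall p q, p < 8 -> q < 8 -> sg k p = sg k q -> p = q) ->
  (forall p q, p < 8 -> q < 8 -> e (nth x0 c p) (nth x0 c q) = famb i (sg k p) (sg k q)) ->
  (forall x p, x \notin c -> p < 8 -> e x (nth x0 c p) = (sg k p == 0) || (sg k p == 4)) ->
  (forall x y, x \notin c -> y \notin c -> e x y = false) ->
  symmetric e ->
  exists i' : 'I_7, isomorphic e (famG #|T| i').
Proof.
move=> n9 uc sc i7 sgl sgi Hcc Hoc Hoo esym.
pose O := [seq t <- enum T | t \notin c].
have uO : uniq O := filter_uniq _ (enum_uniq T).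
have mO : forall t, (t \in O) = (t \notin c) by move=> t; rewrite mem_filter mem_enum andbT.
have sO : 8 + size O <= #|T|.
  have u : uniq (c ++ O).
    rewrite cat_uniq uc uO andbT; apply/hasPn => t; rewrite mO; by [].
  by rewrite -sc -size_cat -(card_uniqP u); apply: max_card.
have n0 : 0 < #|T| by clear -n9; lia.
pose o0 := Ordinal n0.
pose gv := fun t => if t \in c then sg k (index t c) else 8 + index t O.
have ic : forall t, t \in c -> index t c < 8 by move=> t tc; rewrite -sc index_mem.
have gvlt : forall t, gv t < #|T|.
  move=> t; rewrite /gv; case: ifP => tc.
    by have := sgl _ (ic _ tc); clear -n9; lia.
  have : index t O < size O by rewrite index_mem mO tc.
  by clear -sO; lia.
pose g := fun t => (insubd o0 (gv t) : 'I_#|T|).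
have vg : forall t, val (g t) = gv t by move=> t; rewrite val_insubd gvlt.
have ginj : injective g.
  move=> s t /(congr1 val); rewrite !vg /gv.
  case: ifP => sc'; case: ifP => tc' h.
  - by rewrite -(nth_index x0 sc') -(nth_index x0 tc') (sgi _ _ (ic _ sc') (ic _ tc') h).
  - by have := sgl _ (ic _ sc'); rewrite h; clear; lia.
  - by have := sgl _ (ic _ tc'); rewrite -h; clear; lia.
  - have h' : index s O = index t O by clear -h; lia.
    by rewrite -(nth_index x0 (_ : s \in O)) ?mO ?sc' // h' nth_index // mO tc'.
have hcard : #|T| >= #|{: 'I_#|T|}| by rewrite card_ord.
have gbij : bijective g := inj_card_bij ginj hcard.
exists (Ordinal i7), g; split => // s t.
rewrite /famG /= !vg /gv.
case: ifP => sc'; case: ifP => tc'.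
- by rewrite -{1}(nth_index x0 sc') -{1}(nth_index x0 tc') Hcc ?ic.
- rewrite esym -{1}(nth_index x0 sc') Hoc ?ic ?tc' //.
  by rewrite fb_lohi ?sgl ?ic // fb_hi.
- rewrite -{1}(nth_index x0 tc') Hoc ?ic ?sc' //.
  by rewrite fb_hi // fb_lohi ?sgl ?ic // orbF.
- have z8 : forall k, ((8 + k == 0) || (8 + k == 4)) = false by [].
  by rewrite Hoo ?sc' ?tc' // !fb_hi ?leq_addr // !z8.
Qed.


Fixpoint walks (i : nat) (fuel : nat) (x : nat) (vis : seq nat) : seq (seq nat) :=
  if fuel is fuel'.+1 then
    [::] :: flatten [seq [seq y :: p | p <- walks i fuel' y (if y == 8 then vis else y :: vis)]
                    | y <- [seq y <- iota 0 9 | famb i x y && (y \notin vis)]]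
  else [:: [::]].

Lemma walksS i fuel x vis : walks i fuel.+1 x vis =
  [::] :: flatten [seq [seq y :: p | p <- walks i fuel y (if y == 8 then vis else y :: vis)]
                    | y <- [seq y <- iota 0 9 | famb i x y && (y \notin vis)]].
Proof. by []. Qed.

Lemma walks_complete i p : forall fuel x vis, size p <= fuel -> path (famb i) x p ->
  all (fun v => v < 9) p -> 8 \notin vis -> uniq [seq v <- p | v != 8] ->
  all (fun v => v \notin vis) [seq v <- p | v != 8] -> p \in walks i fuel x vis.
Proof.
elim: p => [|y p IH] [|fuel] x vis.
- by rewrite /= inE.
- by rewrite walksS inE eqxx.
- by [].
move=> sp /andP[exy pp] /andP[y9 a9] n8 up av.
rewrite walksS inE; apply/orP; right.
apply/flattenP; exists [seq y :: p0 | p0 <- walks i fuel y (if y == 8 then vis else y :: vis)].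
  apply/mapP; exists y => //; rewrite mem_filter mem_iota add0n leq0n y9 exy /= andbT.
  case: (eqVneq y 8) => [->|y8]; first exact: n8.
  by move: av; rewrite /= y8 => /andP[].
apply/mapP; exists p => //; apply: IH => //.
- case: (eqVneq y 8) => [_|y8] //; by rewrite inE negb_or eq_sym y8.
- move: up; rewrite /=; case: ifP => _ //; by case/andP.
- move: up av; rewrite /=; case: ifP => [y8 /andP[ynp _] /andP[_ av] | y8 _ av].
    rewrite (negbTE y8); apply/allP => v vp; rewrite inE negb_or (allP av v vp) andbT.
    by apply: contraNneq ynp => <-.
  by rewrite (negbFE y8).
Qed.

Definition cyc_ok i :=
  all (fun x => all (fun p => (size p < 12) &&
         (famb i (last x p) x ==> ((size p < 8) && ((8 \in x :: p) ==> (size p < 7)))))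
                    (walks i 12 x (if x == 8 then [::] else [:: x]))) (iota 0 9).

Lemma cyc_ok_all i : i < 7 -> cyc_ok i.
Proof. by case: i => [|[|[|[|[|[|[|i]]]]]]] //; vm_compute. Qed.

Lemma fam_min i a b : fam_base i a b = fam_base i (minn a 8) (minn b 8).
Proof.
case: (ltnP a 8) => ha; case: (ltnP b 8) => hb.
- by [].
- by rewrite !fb_lohi.
- by rewrite !fb_hi.
- rewrite !fb_hi //=; case: b hb {ha} => [|[|[|[|[|b]]]]] //.
Qed.

Lemma famG_cycles n (i : 'I_7) : forall d : seq 'I_n, is_cycle (famG n i) d ->
  size d <= 8 /\ (forall y, y \in d -> 8 <= y -> size d <= 7).
Proof.
have i7 := ltn_ord i.
move=> d [d3 ud cd].
pose phi := fun y : 'I_n => minn y 8.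
have hrel : forall y z, famG n i y z = famb i (phi y) (phi z).
  by move=> y z; rewrite /famG /famb -!fam_min.
case: d d3 ud cd => [|x0 d] // _ ud cd.
have cd' : cycle (famb i) (map phi (x0 :: d)).
  by rewrite cycle_map; move: cd; rewrite /cycle; rewrite (@eq_path _ _ (relpre phi (famb i))).
rewrite /= in cd'; rewrite rcons_path in cd'; case/andP: cd' => pd cl.
have ufil : uniq [seq v <- map phi (x0 :: d) | v != 8].
  rewrite filter_map map_inj_in_uniq ?filter_uniq //.
  move=> y z; rewrite !mem_filter /phi /= => /andP[hy _] /andP[hz _] h.
  apply: val_inj; move: hy hz h; clear.
  case: (ltnP y 8) => hy; case: (ltnP z 8) => hz.
  - by move=> _ _.
  - by move=> _ h; rewrite eqxx in h.
  - by move=> h; rewrite eqxx in h.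
  - by move=> h; rewrite eqxx in h.
pose x := phi x0; pose p := map phi d.
have a9 : forall q : seq 'I_n, all (fun v => v < 9) (map phi q).
  by move=> q; apply/allP => v /mapP [y _ ->]; rewrite /phi; clear; lia.
have vis8 : 8 \notin (if x == 8 then [::] else [:: x]).
  by case: (eqVneq x 8) => [|h] //=; rewrite inE eq_sym.
have up : uniq [seq v <- p | v != 8] /\ all (fun v => v \notin (if x == 8 then [::] else [:: x])) [seq v <- p | v != 8].
  move: ufil; rewrite /= -/x -/p.
  case: (eqVneq x 8) => [_ |x8] /=; first by split => //; apply/allP.
  move=> /andP[xn un]; split => //; apply/allP => v vp; rewrite inE.
  by apply: contraNneq xn => <-.
have ok := allP (cyc_ok_all i7) x (_ : x \in iota 0 9).
have xin : x \in iota 0 9 by rewrite mem_iota /x /phi; clear; lia.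
have sp : size p < 12.
  case: (leqP 12 (size p)) => // h.
  have pt : take 12 p \in walks i 12 x (if x == 8 then [::] else [:: x]).
    have pp := take_path 12 pd.
    apply: walks_complete => //.
    - by rewrite size_take; case: ltnP.
    - by apply/allP => v /mem_take vp; exact: (allP (a9 d) v vp).
    - case: up => u _; move: u; rewrite -{1}(cat_take_drop 12 p) filter_cat cat_uniq.
      by case/and3P.
    - case: up => _ u; move: u; rewrite -{1}(cat_take_drop 12 p) filter_cat all_cat.
      by case/andP.
  have st : size (take 12 p) = 12.
    by rewrite size_take; case: ltnP => // h2; apply/eqP; rewrite eqn_leq h2 h.
  by have := allP (ok xin) _ pt; rewrite st ltnn.
have pw : p \in walks i 12 x (if x == 8 then [::] else [:: x]).
  apply: walks_complete => //; [exact: ltnW | exact: a9 | by case: up | by case: up].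
have := allP (ok xin) _ pw; rewrite cl /= => /andP[_ /andP[h1 h2]].
rewrite /p size_map in h1 h2; split => //.
move=> y yd y8; have h8 : 8 \in map phi (x0 :: d).
  by apply/mapP; exists y => //; rewrite /phi; clear -y8; lia.
exact: (implyP h2 h8).
Qed.


Lemma cycle_ext (T : eqType) (e1 e2 : rel T) c : e1 =2 e2 -> cycle e1 c = cycle e2 c.
Proof. by move=> h; case: c => //= x p; apply: eq_path. Qed.

Lemma cycle_transfer (T U : finType) (e : rel T) (e' : rel U) (h : T -> U) c :
  injective h -> (forall a b, e a b = e' (h a) (h b)) -> is_cycle e c -> is_cycle e' (map h c).
Proof.
move=> hi he [c3 uc cc]; split.
- by rewrite size_map.
- by rewrite map_inj_uniq.
- by rewrite cycle_map (@cycle_ext _ _ e) // => a b; rewrite he.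
Qed.

Lemma cc_iso (T U : finType) (e : rel T) (e' : rel U) : isomorphic e e' -> cc e = cc e'.
Proof.
case=> g [gb ge]; have ginj := bij_inj gb.
case: gb => ginv gK gK'.
have ginvinj : injective ginv by apply: (can_inj gK').
have ge' : forall a b, e' a b = e (ginv a) (ginv b) by move=> a b; rewrite ge !gK'.
have cumT : forall c, cummerbund e c -> cummerbund e' (map g c).
  move=> c [Hc cm]; split; first exact: cycle_transfer Hc.
  move=> d Hd; have := cm _ (cycle_transfer ginvinj ge' Hd).
  by rewrite !size_map.
have cumU : forall d, cummerbund e' d -> cummerbund e (map ginv d).
  move=> d [Hd cm]; split; first exact: cycle_transfer Hd.
  move=> c Hc; have := cm _ (cycle_transfer ginj ge Hc).
  by rewrite !size_map.
have H1 : forall x, x \in ccset e -> g x \in ccset e'.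
  move=> x; rewrite !inE => /asboolP [c [Hc xc]]; apply/asboolP.
  by exists (map g c); split; [exact: cumT | exact: map_f].
have H2 : forall y, y \in ccset e' -> ginv y \in ccset e.
  move=> y; rewrite !inE => /asboolP [d [Hd yd]]; apply/asboolP.
  by exists (map ginv d); split; [exact: cumU | exact: map_f].
rewrite !ccE.
have -> : ccset e' = g @: ccset e.
  apply/setP => y; apply/idP/imsetP.
    by move=> yin; exists (ginv y); [exact: H2 | rewrite gK'].
  by case=> x xs ->; exact: H1.
by rewrite card_imset.
Qed.

Lemma cc_famG n (i : 'I_7) : 9 <= n -> cc (famG n i) = 8.
Proof.
move=> n9; have n0 : 0 < n by clear -n9; lia.
pose o0 := Ordinal n0.
pose C0 := [seq (insubd o0 k : 'I_n) | k <- iota 0 8].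
have vk : forall k, k < 8 -> val (insubd o0 k : 'I_n) = k.
  by move=> k hk; rewrite val_insubd; case: ifP => //; clear -hk n9; lia.
have vC : map val C0 = iota 0 8.
  rewrite -map_comp -[RHS]map_id; apply/eq_in_map => k; rewrite mem_iota /=.
  by move=> hk; rewrite vk.
have uC0 : uniq C0 by rewrite -(map_inj_uniq val_inj) vC iota_uniq.
have cC0 : cycle (famG n i) C0.
  have : cycle (famb i) (map val C0).
    by rewrite vC; case: i => [[|[|[|[|[|[|[|k]]]]]]] hk] //; vm_compute.
  by rewrite cycle_map.
have sC0 : size C0 = 8 by rewrite size_map size_iota.
have HC0 : cummerbund (famG n i) C0.
  split; first by split => //; rewrite sC0.
  by move=> d /famG_cycles []; rewrite sC0.
have memC : forall y : 'I_n, (y \in C0) = (y < 8).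
  move=> y; apply/idP/idP.
    by rewrite -(mem_map val_inj) vC mem_iota.
  by move=> hy; apply/mapP; exists (val y); [rewrite mem_iota | apply: val_inj; rewrite vk].
rewrite ccE -sC0 -(card_uniqP uC0); apply: eq_card => y.
rewrite inE; apply/asboolP/idP; last by move=> yc; exists C0.
case=> d [[Hd dm] yd]; rewrite memC; rewrite ltnNge; apply/negP => y8.
have := dm _ (cummerbund_cycle HC0); rewrite sC0.
have [_ h] := famG_cycles Hd; have := h _ yd y8 => h1 h2.
by have := leq_trans h2 h1.
Qed.


Theorem theorem14 (T : finType) (e : rel T) (e_sym : symmetric e)
  (e_irr : irreflexive e) :
  9 <= #|T| -> two_connected e -> bipartite e ->
  8 <= cc e /\ (cc e = 8 <-> exists i : 'I_7, isomorphic e (famG #|T| i)).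
Proof.
move=> n9 tc [f fH].
split; first exact: (part1 e_sym e_irr tc fH n9).
split; last by case=> i Hi; rewrite (cc_iso Hi) cc_famG.
move=> h8.
have [c0 Hc0] := some_cummerbund e_sym e_irr tc n9.
have [s8 NoOut0] := eight_facts e_sym e_irr tc fH n9 h8 Hc0.
have [[_ uc0 _] _] := Hc0.
have [w wc0] : exists w, w \notin c0.
  case: (pickP (fun w => w \notin c0)) => [w wc|H]; first by exists w.
  have : #|T| <= #|c0|.
    by apply: subset_leq_card; apply/subsetP => t _; move: (H t) => /negbFE.
  by rewrite (card_uniqP uc0) s8 => h; clear -h n9; lia.
have [a1 [b1 [a1c b1c ab1]]] := two_in Hc0.
have [a0 [r0 [b0 [F wr]]]] := fan_exists e_sym e_irr tc (A := fun v => v \in c0) a1c b1c ab1 wc0.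
have rn : r0 != [::] by case: r0 wr {F}.
have [sr [q1 [q2 [hq sq1 sq2]]]] := CP e_sym fH Hc0 s8 NoOut0 F rn.
have [Aa [Ab [ab [ur [ar pr]]]]] := F.
case: r0 sr wr pr {F rn ur ar} => [|y [|z r]] //= _; rewrite inE => /eqP <-.
move=> /andP[ea0w /andP[ewb0 _]].
case: q1 sq1 hq => [|u1 [|u2 [|u3 [|? ?]]]] //= _.
case: q2 sq2 => [|u5 [|u6 [|u7 [|? ?]]]] //= _ hq.
have Hc : cummerbund e [:: a0; u1; u2; u3; b0; u5; u6; u7].
  rewrite -hq; have [[c3 _ cy] cm] := Hc0; split.
    by split; rewrite ?size_rot ?rot_uniq ?rot_cycle.
  by move=> d /cm; rewrite size_rot.
have NoOut : forall x, x \notin [:: a0; u1; u2; u3; b0; u5; u6; u7] ->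
    ~ (exists d, cummerbund e d /\ x \in d).
  by move=> x; rewrite -hq mem_rot; apply: NoOut0.
have wc : w \notin [:: a0; u1; u2; u3; b0; u5; u6; u7] by rewrite -hq mem_rot.
have ew0 : e w a0 by rewrite e_sym.
have ucc : uniq [:: a0; u1; u2; u3; b0; u5; u6; u7] by rewrite -hq rot_uniq.
have ck := check (e a0 u3) (e u1 b0) (e b0 u7) (e u5 a0).
move: ck; rewrite /checkb.
case: (pickfam (e a0 u3) (e u1 b0) (e b0 u7) (e u5 a0)) => i k.
case/and5P => i7 hE hl hinj h04.
have ip : forall p, p < 8 -> p \in iota 0 8 by move=> p hp; rewrite mem_iota.
apply: (iso_build (c := [:: a0; u1; u2; u3; b0; u5; u6; u7]) (x0 := w) (i := i) (k := k)) => //.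
- by move=> p hp; exact: (allP hl p (ip _ hp)).
- move=> p q hp hq' h; have := allP (allP hinj p (ip _ hp)) q (ip _ hq').
  by rewrite h eqxx => /eqP.
- move=> p q hp hq'; rewrite (Ec e_sym e_irr fH Hc NoOut wc ew0 ewb0 hp hq').
  by apply/eqP; exact: (allP (allP hE p (ip _ hp)) q (ip _ hq')).
- move=> x p xc hp; rewrite (Nout e_sym e_irr tc fH Hc NoOut wc ew0 ewb0 xc).
  have h0 := nth_uniq w (s := [:: a0; u1; u2; u3; b0; u5; u6; u7]) (i := p) (j := 0) hp isT ucc.
  have h4 := nth_uniq w (s := [:: a0; u1; u2; u3; b0; u5; u6; u7]) (i := p) (j := 4) hp isT ucc.
  change (nth w [:: a0; u1; u2; u3; b0; u5; u6; u7] 0) with a0 in h0.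
  change (nth w [:: a0; u1; u2; u3; b0; u5; u6; u7] 4) with b0 in h4.
  by rewrite h0 h4 (eqP (allP h04 p (ip _ hp))).
- move=> x yy xc yc; rewrite (Nout e_sym e_irr tc fH Hc NoOut wc ew0 ewb0 xc).
  move: yc; rewrite !inE => /norP[ya /norP[_ /norP[_ /norP[_ /norP[yb _]]]]].
  by rewrite (negbTE ya) (negbTE yb).
Qed.
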